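(* Let $T=S_1\otimes S_3\otimes S_0+S_2\otimes S_0\otimes S_1+S_3\otimes S_2\otimes S_1+S_1\otimes S_2\otimes S_2+S_2\otimes S_1\otimes S_3+S_3\otimes S_3\otimes S_3$ and $$U_8=S_0\otimes S_0\otimes S_0+S_1\otimes S_3\otimes S_0+S_2\otimes S_0\otimes S_1+S_3\otimes S_2\otimes S_1+S_0\otimes S_1\otimes S_2+S_1\otimes S_2\otimes S_2+S_2\otimes S_1\otimes S_3+S_3\otimes S_3\otimes S_3.$$ Then $\mathrm{sr}(T)=6$ and $\mathrm{sr}(U_8)\ge 6$.
   Context: $S_0=\begin{bmatrix}1&0\\0&0\end{bmatrix}$, $S_1=\begin{bmatrix}0&1\\0&0\end{bmatrix}$, $S_2=\begin{bmatrix}0&0\\1&0\end{bmatrix}$, $S_3=\begin{bmatrix}0&0\\0&1\end{bmatrix}$. For a matrix $U$ on $\mathbb{C}^2\otimes\mathbb{C}^2\otimes\mathbb{C}^2$ (systems $A,B,C$), its Schmidt rank $\mathrm{sr}(U)$ is the least integer $r$ such that $U=\sum_{j=1}^r A_j\otimes B_j\otimes C_j$ with $A_j,B_j,C_j$ complex $2\times 2$ matrices (i.e. the tensor rank of $U$). *)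

(* Defs.v *)
(* Complex numbers = R[i] for R : realType (so R[i] is C). *)
From mathcomp Require Import all_boot all_algebra.
From mathcomp Require Import reals.
From mathcomp Require Import complex mxtens.
Set Implicit Arguments. Unset Strict Implicit. Unset Printing Implicit Defensive.
Import GRing.Theory.
Local Open Scope ring_scope.

Section Defs.
Variable K : pzRingType.

Definition S0 : 'M[K]_2 := \matrix_(i < 2, j < 2) ((i == 0 :> nat) && (j == 0 :> nat))%:R.
Definition S1 : 'M[K]_2 := \matrix_(i < 2, j < 2) ((i == 0 :> nat) && (j == 1 :> nat))%:R.
Definition S2 : 'M[K]_2 := \matrix_(i < 2, j < 2) ((i == 1 :> nat) && (j == 0 :> nat))%:R.
Definition S3 : 'M[K]_2 := \matrix_(i < 2, j < 2) ((i == 1 :> nat) && (j == 1 :> nat))%:R.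

Definition tens3 (A B C : 'M[K]_2) : 'M[K]_(2 * 2 * 2) := tensmx (tensmx A B) C.

Definition has_tensor_decomp (U : 'M[K]_(2 * 2 * 2)) (r : nat) : Prop :=
  exists (A B C : 'I_r -> 'M[K]_2), U = \sum_(j < r) tens3 (A j) (B j) (C j).

Definition schmidt_rank_is (U : 'M[K]_(2 * 2 * 2)) (n : nat) : Prop :=
  has_tensor_decomp U n /\ forall r, has_tensor_decomp U r -> (n <= r)%N.

Definition Tmx : 'M[K]_(2 * 2 * 2) :=
  tens3 S1 S3 S0 + tens3 S2 S0 S1 + tens3 S3 S2 S1
  + tens3 S1 S2 S2 + tens3 S2 S1 S3 + tens3 S3 S3 S3.

Definition U8 : 'M[K]_(2 * 2 * 2) :=
  tens3 S0 S0 S0 + tens3 S1 S3 S0 + tens3 S2 S0 S1 + tens3 S3 S2 S1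
  + tens3 S0 S1 S2 + tens3 S1 S2 S2 + tens3 S2 S1 S3 + tens3 S3 S3 S3.
End Defs.

(* Main.v *)
Require Import Defs.
From mathcomp Require Import all_boot all_algebra.
From mathcomp Require Import reals.
From mathcomp Require Import complex mxtens.
From mathcomp Require Import ring.
Set Implicit Arguments. Unset Strict Implicit. Unset Printing Implicit Defensive.
Import GRing.Theory.
Local Open Scope ring_scope.

Section Gen.
Variable F : fieldType.

Definition dec (P Q S : Type) (t : P -> Q -> S -> F) (r : nat) : Prop :=
  exists (a : 'I_r -> P -> F) (b : 'I_r -> Q -> F) (c : 'I_r -> S -> F),
    forall p q s, t p q s = \sum_(j < r) a j p * b j q * c j s.

Lemma dec0 P Q S (t : P -> Q -> S -> F) p q s : dec t 0 -> t p q s = 0.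
Proof. by case=> a [b [c H]]; rewrite H big_ord0. Qed.

Lemma subB P Q S (t : P -> Q -> S -> F) r q0 p1 s1 :
  dec t r.+1 -> t p1 q0 s1 != 0 ->
  exists mu : Q -> F, dec (fun p q s => t p q s - mu q * t p q0 s) r.
Proof.
case=> a [b [c H]] Hn.
case: (pickP (fun j => b j q0 != 0)) => [j0 Hj0|Hno]; last first.
  exfalso; move: Hn; rewrite H big1 ?eqxx // => j _.
  by move: (Hno j) => /= /negbFE/eqP ->; rewrite mulr0 mul0r.
exists (fun q => b j0 q / b j0 q0).
exists (fun k => a (lift j0 k)),
  (fun k q => b (lift j0 k) q - b j0 q / b j0 q0 * b (lift j0 k) q0),
  (fun k => c (lift j0 k)).
move=> p q s; rewrite !H mulr_sumr -sumrB (bigD1_ord j0) //=.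
have -> : a j0 p * b j0 q * c j0 s - b j0 q / b j0 q0 * (a j0 p * b j0 q0 * c j0 s) = 0.
  by field.
by rewrite add0r; apply: eq_bigr => k _; ring.
Qed.

Lemma flat4 P Q S (t : P -> Q -> S -> F) r (f : 'I_4 -> P) (g : 'I_4 -> Q) (h : 'I_4 -> S) :
  dec t r -> (forall k l, t (f k) (g k) (h l) = (k == l)%:R) -> (4 <= r)%N.
Proof.
case=> a [b [c H]] Hd.
pose X := \matrix_(k < 4, j < r) (a j (f k) * b j (g k)).
pose Y := \matrix_(j < r, l < 4) c j (h l).
have XY : X *m Y = 1%:M.
  apply/matrixP=> k l; rewrite !mxE -Hd H.
  by apply: eq_bigr => j _; rewrite !mxE.
have := mxrankM_maxl X Y; rewrite XY mxrank1 => H4.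
exact: leq_trans H4 (rank_leq_col X).
Qed.
End Gen.

Section Spec.
Variable F : fieldType.
Definition o0 : 'I_2 := ord0.
Definition o1 : 'I_2 := ord_max.

Definition tfun (M : 'M[F]_(2 * 2 * 2)) (p q s : 'I_2 * 'I_2) : F :=
  M (mxtens_index (mxtens_index (p.1, q.1), s.1))
    (mxtens_index (mxtens_index (p.2, q.2), s.2)).

Lemma tfunD M N p q s : tfun (M + N) p q s = tfun M p q s + tfun N p q s.
Proof. by rewrite /tfun mxE. Qed.

Lemma tfun_tens3 (X Y Z : 'M[F]_2) p q s :
  tfun (tens3 X Y Z) p q s = X p.1 p.2 * Y q.1 q.2 * Z s.1 s.2.
Proof. by rewrite /tfun /tens3 !tensmxE. Qed.

Lemma dec_of M r : has_tensor_decomp M r -> dec (tfun M) r.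
Proof.
case=> A [B [C ->]]; exists (fun j p => A j p.1 p.2), (fun j q => B j q.1 q.2),
  (fun j s => C j s.1 s.2) => p q s.
by rewrite /tfun summxE; apply: eq_bigr => j _; rewrite -tfun_tens3.
Qed.

Definition a1 := (o0, o1). Definition a2 := (o1, o0). Definition a3 := (o1, o1).
Definition b0 := (o0, o0). Definition b1 := (o0, o1).
Definition c0 := (o0, o0). Definition c1 := (o0, o1). Definition c3 := (o1, o1).
Definition ff (k : 'I_4) := if (k < 2)%N then a1 else a3.
Definition gg (k : 'I_4) := if odd k then (o1, o1) else (o1, o0).
Definition hh (k : 'I_4) := match nat_of_ord k with 0 => (o1,o0) | 1 => (o0,o0) | 2 => (o0,o1) | _ => (o1,o1) end.

Lemma lower6 (t : _ -> _ -> _ -> F) r : dec t r ->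
  t a2 b0 c1 = 1 -> t a2 b0 c3 = 0 -> t a2 b1 c3 = 1 ->
  (forall k l, t (ff k) b0 (hh l) = 0) -> (forall k l, t (ff k) b1 (hh l) = 0) ->
  (forall k l, t (ff k) (gg k) (hh l) = (k == l)%:R) -> (6 <= r)%N.
Proof.
move=> D H1 H2 H3 Z0 Z1 Hd.
case: r D => [|r1] D; first by move: (dec0 a2 b0 c1 D); rewrite H1 => /eqP; rewrite oner_eq0.
have n1 : t a2 b0 c1 != 0 by rewrite H1 oner_neq0.
have [mu D1] := @subB _ _ _ _ _ _ b0 a2 c1 D n1.
case: r1 D D1 => [|r2] D D1.
  by move: (dec0 a2 b1 c3 D1); rewrite H3 H2 mulr0 subr0 => /eqP; rewrite oner_eq0.
have n2 : t a2 b1 c3 - mu b1 * t a2 b0 c3 != 0 by rewrite H3 H2 mulr0 subr0 oner_neq0.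
have [nu D2] := @subB _ _ _ _ _ _ b1 a2 c3 D1 n2.
have := @flat4 _ _ _ _ _ _ ff gg hh D2; apply=> k l /=.
by rewrite Z0 Z1 Hd !mulr0 !subr0 mulr0 subr0.
Qed.
End Spec.

Ltac ent := rewrite /Tmx /U8 !tfunD !tfun_tens3 /S0 /S1 /S2 /S3 !mxE /=;
  rewrite ?mulr1n ?mulr0n ?mul1r ?mulr1 ?mul0r ?mulr0 ?addr0 ?add0r ?subr0.

Lemma T_lower (F : fieldType) r : has_tensor_decomp (Tmx F) r -> (6 <= r)%N.
Proof.
move=> /dec_of D; apply: (lower6 D).
- by ent.
- by ent.
- by ent.
- by move=> [[|[|[|[|//]]]] ?] [[|[|[|[|//]]]] ?]; ent.
- by move=> [[|[|[|[|//]]]] ?] [[|[|[|[|//]]]] ?]; ent.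
- by move=> [[|[|[|[|//]]]] ?] [[|[|[|[|//]]]] ?]; ent.
Qed.

Lemma U8_lower (F : fieldType) r : has_tensor_decomp (U8 F) r -> (6 <= r)%N.
Proof.
move=> /dec_of D; apply: (lower6 D).
- by ent.
- by ent.
- by ent.
- by move=> [[|[|[|[|//]]]] ?] [[|[|[|[|//]]]] ?]; ent.
- by move=> [[|[|[|[|//]]]] ?] [[|[|[|[|//]]]] ?]; ent.
- by move=> [[|[|[|[|//]]]] ?] [[|[|[|[|//]]]] ?]; ent.
Qed.

Lemma T_upper (K : pzRingType) : has_tensor_decomp (Tmx K) 6.
Proof.
exists (fun j : 'I_6 => nth 0 [:: S1 K; S2 K; S3 K; S1 K; S2 K; S3 K] j),
  (fun j : 'I_6 => nth 0 [:: S3 K; S0 K; S2 K; S2 K; S1 K; S3 K] j),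
  (fun j : 'I_6 => nth 0 [:: S0 K; S1 K; S1 K; S2 K; S3 K; S3 K] j).
by rewrite !big_ord_recr big_ord0 /= add0r.
Qed.

Theorem lemma4 (R : realType) :
  schmidt_rank_is (Tmx R[i]) 6 /\
  (forall r : nat, has_tensor_decomp (U8 R[i]) r -> (6 <= r)%N).
Proof.
split; last exact: U8_lower.
split; [exact: T_upper | exact: T_lower].
Qed.
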